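(* Let $\omega>0$, $0<\rho\le1$ and $A=\begin{pmatrix}0&-\rho^{-1}\omega\\ \rho\omega&0\end{pmatrix}$. Then for the autonomous system $\dot u=Au$ in $\mathbb R^2$, $$\vartheta_1^{\sup,\varlimsup}=\vartheta_1^{\sup,\varliminf}=\vartheta_1^{\varlimsup,\sup}=\vartheta_1^{\varliminf,\sup}=\omega.$$
   Context: For $A\in C([0,\infty),\mathbb R^{d\times d})$ let $\Phi(t,\tau)$ be the solution operator of $\dot u=A(t)u$ (here $\Phi(t,0)=e^{tA}$). $\mathcal G(s,d)$ is the Grassmannian of $s$-dimensional subspaces of $\mathbb R^d$, $P_V$ the orthogonal projection onto $V$, $\|\cdot\|$ the spectral norm. For $V\in\mathcal G(s,d)$ let $a_{0,T}(V)=\int_0^T\|(I_d-P_{\Phi(\tau,0)V})A(\tau)P_{\Phi(\tau,0)V}\|\,d\tau$, and $\vartheta_s^{\sup,\varlimsup}=\sup_{V}\varlimsup_{T\to\infty}\frac1Ta_{0,T}(V)$, $\vartheta_s^{\sup,\varliminf}=\sup_V\varliminf_{T\to\infty}\frac1Ta_{0,T}(V)$, $\vartheta_s^{\varlimsup,\sup}=\varlimsup_{T\to\infty}\sup_V\frac1Ta_{0,T}(V)$, $\vartheta_s^{\varliminf,\sup}=\varliminf_{T\to\infty}\sup_V\frac1Ta_{0,T}(V)$, suprema over $V\in\mathcal G(s,d)$. *)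

(* Defs.v *)
From HB Require Import structures.
From mathcomp Require Import all_boot all_order all_algebra.
From mathcomp Require Import all_classical all_reals all_analysis.
Set Implicit Arguments. Unset Strict Implicit. Unset Printing Implicit Defensive.
Import Order.TTheory GRing.Theory Num.Theory.
Import numFieldNormedType.Exports.
Local Open Scope classical_set_scope.
Local Open Scope ring_scope.

Section Defs.
Variable R : realType.

Definition eucl_norm (d : nat) (x : 'cV[R]_d) : R :=
  Num.sqrt (\sum_(i < d) x i ord0 ^+ 2).

Definition spec_norm (d : nat) (M : 'M[R]_d) : R :=
  sup [set eucl_norm (M *m x) | x in [set x : 'cV[R]_d | eucl_norm x = 1]].

(* An s-dimensional subspace of R^d is represented by a d x s matrix B whose
   columns form a basis (rank s); the subspace is its column space. *)
Definition grass (s d : nat) : set 'M[R]_(d, s) := [set B | \rank B = s].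

Definition orth_proj (d s : nat) (B : 'M[R]_(d, s)) : 'M[R]_d :=
  B *m invmx (B^T *m B) *m B^T.

(* Phi is the solution operator Phi(t,0) of u' = A(t) u :
   Phi(0) = I and Phi'(t) = A(t) Phi(t) (entrywise). *)
Definition is_solution_operator (d : nat) (A : R -> 'M[R]_d)
  (Phi : R -> 'M[R]_d) : Prop :=
  Phi 0 = 1%:M /\
  forall t i j, is_derive t (1:R) (fun u => Phi u i j) ((A t *m Phi t) i j).

Definition a_integrand (d s : nat) (A : R -> 'M[R]_d) (Phi : R -> 'M[R]_d)
  (B : 'M[R]_(d, s)) (tau : R) : R :=
  let P := orth_proj (Phi tau *m B) in
  spec_norm ((1%:M - P) *m A tau *m P).

Definition a0T (d s : nat) (A : R -> 'M[R]_d) (Phi : R -> 'M[R]_d)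
  (B : 'M[R]_(d, s)) (T : R) : \bar R :=
  (\int[lebesgue_measure]_(tau in `[0%R, T]%classic) (a_integrand A Phi B tau)%:E)%E.

Definition avg_a (d s : nat) (A : R -> 'M[R]_d) (Phi : R -> 'M[R]_d)
  (B : 'M[R]_(d, s)) (T : R) : \bar R := ((T^-1)%:E * a0T A Phi B T)%E.

Definition theta_sup_limsup (d s : nat) (A : R -> 'M[R]_d) (Phi : R -> 'M[R]_d) : \bar R :=
  ereal_sup [set limf_esup (avg_a A Phi (B : 'M[R]_(d, s))) (pinfty_nbhs R) | B in @grass s d].
Definition theta_sup_liminf (d s : nat) (A : R -> 'M[R]_d) (Phi : R -> 'M[R]_d) : \bar R :=
  ereal_sup [set limf_einf (avg_a A Phi (B : 'M[R]_(d, s))) (pinfty_nbhs R) | B in @grass s d].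
Definition theta_limsup_sup (d s : nat) (A : R -> 'M[R]_d) (Phi : R -> 'M[R]_d) : \bar R :=
  limf_esup (fun T => ereal_sup [set avg_a A Phi (B : 'M[R]_(d, s)) T | B in @grass s d])
    (pinfty_nbhs R).
Definition theta_liminf_sup (d s : nat) (A : R -> 'M[R]_d) (Phi : R -> 'M[R]_d) : \bar R :=
  limf_einf (fun T => ereal_sup [set avg_a A Phi (B : 'M[R]_(d, s)) T | B in @grass s d])
    (pinfty_nbhs R).

End Defs.

(* Main.v *)
Require Import Defs.
From HB Require Import structures.
From mathcomp Require Import all_boot all_order all_algebra.
From mathcomp Require Import all_classical all_reals all_analysis.
From mathcomp Require Import ring lra.
Import Order.TTheory GRing.Theory Num.Theory.
Import numFieldNormedType.Exports.
Local Open Scope classical_set_scope.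
Local Open Scope ring_scope.
Section S.
Variable R : realType.
Implicit Types (f g : R -> R) (t k df dg : R).

Lemma dscale f t k df : is_derive t 1 f df -> is_derive t 1 (fun u => k * f u) (k * df).
Proof. move=> H; exact: (is_deriveZ k H). Qed.
Lemma dadd f g t df dg : is_derive t 1 f df -> is_derive t 1 g dg ->
  is_derive t 1 (fun u => f u + g u) (df + dg).
Proof. move=> H1 H2; exact: (is_deriveD H1 H2). Qed.
Lemma dmul f g t df dg : is_derive t 1 f df -> is_derive t 1 g dg ->
  is_derive t 1 (fun u => f u * g u) (f t * dg + g t * df).
Proof. move=> H1 H2; exact: (is_deriveM H1 H2). Qed.
Lemma dinv f t df : f t != 0 -> is_derive t 1 f df ->
  is_derive t 1 (fun u => (f u)^-1) (- (f t) ^- 2 * df).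
Proof. move=> H1 H2; exact: (is_deriveV H1 H2). Qed.
Lemma datan f t df : is_derive t 1 f df ->
  is_derive t 1 (fun u => atan (f u)) ((1 + (f t) ^+ 2)^-1 * df).
Proof. move=> H; apply: (@is_derive1_comp R atan f t _ _ _ H). Qed.
Arguments dscale {f t} k {df}.
Arguments dadd {f g t df dg}.
Arguments dmul {f g t df dg}.
Arguments dinv {f t df}.
Arguments datan {f t df}.
Lemma did t : is_derive t 1 (fun u : R => u) 1.
Proof. exact: is_derive_id. Qed.
Lemma dcont f t df : is_derive t 1 f df -> {for t, continuous f}.
Proof. by move=> [H _]; exact/differentiable_continuous/derivable1_diffP. Qed.
Notation i0 := (@ord0 1).
Notation i1 := (@ord_max 1).
Lemma sum2 (f : 'I_2 -> R) : \sum_(i < 2) f i = f i0 + f i1.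
Proof.
rewrite big_ord_recr big_ord_recr big_ord0 /= add0r. congr (f _ + f _); exact: val_inj.
Qed.
Lemma ord2P (P : 'I_2 -> Prop) : P i0 -> P i1 -> forall i, P i.
Proof. move=> h0 h1 [[|[|i]] Hi] //. 
- by have -> : Ordinal Hi = i0 by exact: val_inj.
- by have -> : Ordinal Hi = i1 by exact: val_inj.
Qed.

Lemma ord2_cases (i : 'I_2) : i = i0 \/ i = i1.
Proof. by case: i => [[|[|i]] Hi]; [left|right|]; try apply: val_inj. Qed.

Lemma spec_rank1 (M : 'M[R]_2) (k : R) (p q : 'I_2 -> R) :
  (forall i j, M i j = k * p i * q j) -> 0 < q i0 ^+ 2 + q i1 ^+ 2 ->
  spec_norm M = Num.sqrt (k ^+ 2 * (p i0 ^+ 2 + p i1 ^+ 2) * (q i0 ^+ 2 + q i1 ^+ 2)).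
Proof.
move=> HM Hq.
set P2 := p i0 ^+ 2 + p i1 ^+ 2; set Q2 := q i0 ^+ 2 + q i1 ^+ 2.
have P2ge : 0 <= P2 by rewrite /P2 addr_ge0 // sqr_ge0.
have Mz : forall z : 'cV[R]_2, eucl_norm (M *m z) =
    Num.sqrt (k ^+ 2 * P2 * (q i0 * z i0 ord0 + q i1 * z i1 ord0) ^+ 2).
  move=> z; rewrite /eucl_norm sum2 !mxE !sum2 !HM; congr Num.sqrt.
  rewrite /P2; ring.
pose s := Num.sqrt Q2.
have s0 : 0 < s by rewrite sqrtr_gt0.
have ss : s ^+ 2 = Q2 by rewrite sqr_sqrtr // ltW.
pose zq : 'cV[R]_2 := \col_i (q i / s).
have hzq : eucl_norm zq = 1.
  rewrite /eucl_norm sum2 !mxE /= !expr_div_n ss -mulrDl /Q2 divff ?sqrtr1 //; by rewrite gt_eqF.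
have ub : ubound [set eucl_norm (M *m x) | x in [set x : 'cV[R]_2 | eucl_norm x = 1]]
            (Num.sqrt (k ^+ 2 * P2 * Q2)).
  move=> _ [z /= Hz <-]; rewrite Mz.
  rewrite ler_sqrt; last by apply: mulr_ge0; [apply: mulr_ge0; [apply: sqr_ge0|]|]; rewrite /Q2 ?addr_ge0 ?sqr_ge0.
  move: Hz; rewrite /eucl_norm sum2 => /(congr1 (fun t => t ^+ 2)).
  rewrite sqr_sqrtr ?addr_ge0 ?sqr_ge0 // expr1n => Hz.
  apply: ler_wpM2l; first by rewrite mulr_ge0 ?sqr_ge0.
  have -> : Q2 = Q2 * (z i0 ord0 ^+ 2 + z i1 ord0 ^+ 2) by rewrite Hz mulr1.
  rewrite /Q2 -subr_ge0.
  have -> : (q i0 ^+ 2 + q i1 ^+ 2) * (z i0 ord0 ^+ 2 + z i1 ord0 ^+ 2) -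
     (q i0 * z i0 ord0 + q i1 * z i1 ord0) ^+ 2 = (q i0 * z i1 ord0 - q i1 * z i0 ord0) ^+ 2 by ring.
  exact: sqr_ge0.
rewrite /spec_norm.
apply/eqP; rewrite eq_le; apply/andP; split.
- apply: ge_sup => //.
  by exists (eucl_norm (M *m zq)); exists zq.
- apply: sup_upper_bound.
    split; last by exists (Num.sqrt (k ^+ 2 * P2 * Q2)).
    by exists (eucl_norm (M *m zq)); exists zq.
  exists zq => //.
  rewrite Mz !mxE; congr Num.sqrt; congr (_ * _).
  have -> : q i0 * (q i0 / s) + q i1 * (q i1 / s) = Q2 / s by rewrite /Q2; field; rewrite gt_eqF.
  rewrite expr_div_n ss expr2 -mulrA divff ?mulr1 // gt_eqF // -ss exprn_gt0.
Qed.

Lemma integrand_eq (A : 'M[R]_2) (a b : R) (w : 'M[R]_(2,1)) :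
  A i0 i0 = 0 -> A i0 i1 = - a -> A i1 i0 = b -> A i1 i1 = 0 ->
  0 < a -> 0 < b -> 0 < w i0 ord0 ^+ 2 + w i1 ord0 ^+ 2 ->
  spec_norm ((1%:M - orth_proj w) *m A *m orth_proj w) =
  (b * w i0 ord0 ^+ 2 + a * w i1 ord0 ^+ 2) / (w i0 ord0 ^+ 2 + w i1 ord0 ^+ 2).
Proof.
move=> h00 h01 h10 h11 a0 b0 n0.
set x := w i0 ord0; set y := w i1 ord0; set n := x ^+ 2 + y ^+ 2.
have nn : n != 0 by rewrite gt_eqF.
have wtw : w^T *m w = n%:M.
  apply/matrixP => i j; rewrite !ord1 !mxE sum2 !mxE /= /n /x /y mulr1n; ring.
have P_E : forall i j, orth_proj w i j = n^-1 * w i ord0 * w j ord0.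
  move=> i j; rewrite /orth_proj wtw invmx_scalar mul_mx_scalar !mxE big_ord1 !mxE; ring.
set c := b * x ^+ 2 + a * y ^+ 2.
have c0 : 0 < c.
  have n0' : 0 < x ^+ 2 + y ^+ 2 by [].
  have hx := sqr_ge0 x; have hy := sqr_ge0 y.
  rewrite /c; move: (x ^+ 2) (y ^+ 2) hx hy n0' => X Y hX hY hn.
  have [X0|X0] := ltrP 0 X.
    by apply: ltr_pwDl; [apply: mulr_gt0 | apply: mulr_ge0 => //; apply: ltW].
  have -> : X = 0 by apply/eqP; rewrite eq_le X0 hX.
  rewrite mulr0 add0r; apply: mulr_gt0 => //; lra.
pose p : 'I_2 -> R := fun i => if i == i0 then - y else x.
pose q : 'I_2 -> R := fun i => if i == i0 then x else y.
rewrite (@spec_rank1 _ (c / n ^+ 2) p q).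
- rewrite /p /q /= -/n.
  have -> : (c / n ^+ 2) ^+ 2 * ((- y) ^+ 2 + x ^+ 2) * n = (c / n) ^+ 2.
    rewrite /n; field; by rewrite -/n.
  by rewrite sqrtr_sqr ger0_norm // divr_ge0 // ltW.
- idtac.
  have PE : orth_proj w = \matrix_(i, j) (n^-1 * w i ord0 * w j ord0).
    by apply/matrixP => i j; rewrite P_E mxE.
  rewrite PE => i j; case: (ord2_cases i) => ->; case: (ord2_cases j) => ->;
  rewrite !mxE !sum2 !mxE !sum2 !mxE /p /q /= -/x -/y h00 h01 h10 h11 /c /n; field; by rewrite -/n.
- by rewrite /q /=.
Qed.

Lemma pos_comb (a b X Y : R) : 0 < a -> 0 < b -> 0 <= X -> 0 <= Y -> 0 < X + Y -> 0 < b * X + a * Y.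
Proof.
move=> a0 b0 hX hY hn.
have [X0|X0] := ltrP 0 X.
  by apply: ltr_pwDl; [apply: mulr_gt0 | apply: mulr_ge0 => //; apply: ltW].
have -> : X = 0 by apply/eqP; rewrite eq_le X0 hX.
rewrite mulr0 add0r; apply: mulr_gt0 => //; lra.
Qed.

Lemma pos_comb_inv (a b X Y : R) : 0 <= X -> 0 <= Y -> 0 < b * X + a * Y -> 0 < X + Y.
Proof.
move=> hX hY hc; rewrite lt_def addr_ge0 // andbT; apply/negP => /eqP h.
have X0 : X = 0 by lra.
have Y0 : Y = 0 by lra.
by move: hc; rewrite X0 Y0 !mulr0 addr0 ltxx.
Qed.

Variables (omega rho : R) (homega : 0 < omega) (hrho0 : 0 < rho) (A : 'M[R]_2)
  (h00 : A i0 i0 = 0) (h01 : A i0 i1 = - (rho^-1 * omega))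
  (h10 : A i1 i0 = rho * omega) (h11 : A i1 i1 = 0)
  (Phi : R -> 'M[R]_2) (hPhi : is_solution_operator (fun _ => A) Phi).

Lemma dw (B : 'M[R]_(2,1)) t i :
  is_derive t 1 (fun u => (Phi u *m B) i ord0) ((A *m (Phi t *m B)) i ord0).
Proof.
have -> : (fun u => (Phi u *m B) i ord0) =
   (fun u => B i0 ord0 * Phi u i i0 + B i1 ord0 * Phi u i i1).
  by apply/funext => u; rewrite mxE sum2 mulrC [X in _ + X]mulrC.
have := dadd (dscale (B i0 ord0) (hPhi.2 t i i0)) (dscale (B i1 ord0) (hPhi.2 t i i1)).
move/is_derive_eq; apply.
by rewrite mulmxA [in RHS]mxE sum2 mulrC [X in _ + X]mulrC.
Qed.

Lemma key (B : 'M[R]_(2,1)) : \rank B = 1%N -> exists (F : R -> R) (c0 : R),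
  [/\ forall u, a_integrand (fun _ => A) Phi B u = c0 / ((Phi u *m B) i0 ord0 ^+ 2 + (Phi u *m B) i1 ord0 ^+ 2),
     forall u : R, is_derive u (1:R) F (c0 / ((Phi u *m B) i0 ord0 ^+ 2 + (Phi u *m B) i1 ord0 ^+ 2)),
     forall u, 0 < (Phi u *m B) i0 ord0 ^+ 2 + (Phi u *m B) i1 ord0 ^+ 2 &
     forall u, `|F u - omega * u| < pi / 2].
Proof.
move=> rB.
pose x u := (Phi u *m B) i0 ord0.
pose y u := (Phi u *m B) i1 ord0.
set a := rho^-1 * omega; set b := rho * omega.
have a0 : 0 < a by rewrite /a mulr_gt0 // invr_gt0.
have b0 : 0 < b by rewrite /b mulr_gt0.
have hx : forall t, is_derive t 1 x (- a * y t).
  move=> t; apply: is_derive_eq; first exact: dw.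
  by rewrite mxE sum2 h00 h01 mul0r add0r mulNr.
have hy : forall t, is_derive t 1 y (b * x t).
  move=> t; apply: is_derive_eq; first exact: dw.
  by rewrite mxE sum2 h10 h11 mul0r addr0.
pose c u := b * (x u * x u) + a * (y u * y u).
have cE : forall u, c u = c 0.
  move=> u; apply: is_derive_0_is_cst => t.
  have := dadd (dscale b (dmul (hx t) (hx t))) (dscale a (dmul (hy t) (hy t))).
  move/is_derive_eq; apply; ring.
have Bnz : 0 < B i0 ord0 ^+ 2 + B i1 ord0 ^+ 2.
  rewrite lt_def addr_ge0 ?sqr_ge0 // andbT; apply/negP => /eqP h.
  have hb0 : B i0 ord0 ^+ 2 = 0 by have := sqr_ge0 (B i0 ord0); have := sqr_ge0 (B i1 ord0); lra.
  have hb1 : B i1 ord0 ^+ 2 = 0 by have := sqr_ge0 (B i0 ord0); have := sqr_ge0 (B i1 ord0); lra.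
  move: hb0 hb1 => /eqP; rewrite sqrf_eq0 => /eqP hb0 /eqP; rewrite sqrf_eq0 => /eqP hb1.
  have : B = 0.
    apply/matrixP => i j; rewrite !ord1 mxE; by case: (ord2_cases i) => ->.
  by move=> B0; move: rB; rewrite B0 mxrank0.
have c0pos : 0 < c 0.
  rewrite /c /x /y hPhi.1 mul1mx -!expr2; apply: pos_comb => //; exact: sqr_ge0.
have npos : forall u, 0 < x u ^+ 2 + y u ^+ 2.
  move=> u; apply: (@pos_comb_inv a b); rewrite ?sqr_ge0 // !expr2 -/(c u) cE //.
exists (fun u => omega * u + atan ((rho - 1) * (x u * y u) * (rho * (x u * x u) + y u * y u)^-1)).
exists (c 0); split.
- move=> u; rewrite /a_integrand (@integrand_eq _ a b) //; last exact: npos.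
  by rewrite -/(x u) -/(y u) -(cE u) /c !expr2.
- move=> t.
  have Dpos : 0 < rho * (x t * x t) + y t * y t.
    rewrite -!expr2; have := @pos_comb 1 rho (x t ^+ 2) (y t ^+ 2); rewrite mul1r; apply => //; rewrite ?sqr_ge0 //; exact: npos.
  have := dadd (dscale omega (did t)) (datan (dmul (dscale (rho - 1) (dmul (hx t) (hy t)))
       (@dinv (fun u => rho * (x u * x u) + y u * y u) t _ (lt0r_neq0 Dpos) (dadd (dscale rho (dmul (hx t) (hx t))) (dmul (hy t) (hy t)))))).
  move/is_derive_eq; apply.
  rewrite -(cE t) /c -/(x t) -/(y t).
  have nt := npos t.
  move: Dpos nt; rewrite /a /b.
  move: (x t) (y t) => X Y Dp np.
  field.
  have h4 : 0 < (rho * (X * X) + Y * Y) ^+ 2 + ((rho - 1) * (X * Y)) ^+ 2.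
    by apply: (lt_le_trans (exprn_gt0 2 Dp)); rewrite lerDl sqr_ge0.
  by rewrite (lt0r_neq0 np) (lt0r_neq0 hrho0) (lt0r_neq0 Dp) (lt0r_neq0 h4).
- move=> u; exact: (npos u).
- move=> u; rewrite addrAC subrr add0r.
  by rewrite ltr_norml atan_ltpi2 atan_gtNpi2.
Qed.
Lemma avg_bound (B : 'M[R]_(2,1)) (T : R) : \rank B = 1%N -> 0 < T ->
  ((omega - pi / T)%:E <= avg_a (fun _ => A) Phi B T <= (omega + pi / T)%:E)%E.
Proof.
move=> rB T0.
have [F [c0 [hI dF npos hF]]] := key B rB.
pose fI u := c0 / ((Phi u *m B) i0 ord0 ^+ 2 + (Phi u *m B) i1 ord0 ^+ 2).
have dfI : forall u, exists d, is_derive u (1:R) fI d.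
  move=> u; eexists.
  exact: (dscale c0 (@dinv (fun u => (Phi u *m B) i0 ord0 ^+ 2 + (Phi u *m B) i1 ord0 ^+ 2) u _
     (lt0r_neq0 (npos u)) (dadd (dmul (dw B u i0) (dw B u i0)) (dmul (dw B u i1) (dw B u i1))))).
have hint : a0T (fun _ => A) Phi B T = ((F T)%:E - (F 0)%:E)%E.
  rewrite /a0T.
  transitivity (\int[lebesgue_measure]_(tau in `[0%R, T]%classic) (fI tau)%:E)%E.
    by apply: eq_integral => u _; rewrite hI.
  apply: continuous_FTC2 => //.
  - apply: continuous_subspaceT => u; have [d hd] := dfI u; exact: dcont hd.
  - split.
    + move=> u _; by case: (dF u).
    + apply: cvg_at_right_filter; exact: dcont (dF 0).
    + apply: cvg_at_left_filter; exact: dcont (dF T).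
  - move=> u _; rewrite derive1E; exact: derive_val.
rewrite /avg_a hint -EFinB -EFinM !lee_fin.
have h1 := hF T; have h2 := hF 0.
move: h1 h2; rewrite !ltr_norml mulr0 subr0 => /andP[h1 h1'] /andP[h2 h2'].
have pi0 : 0 < pi :> R := pi_gt0 R.
have -> : omega - pi / T = (omega * T - pi) / T by field; rewrite gt_eqF.
have -> : omega + pi / T = (omega * T + pi) / T by field; rewrite gt_eqF.
rewrite [T^-1 * _]mulrC !ler_pM2r ?invr_gt0 //.
apply/andP; split; lra.
Qed.
End S.

Section L.
Variable R : realType.
Lemma limsup_sq (g : R -> \bar R) (w c : R) : 0 <= c ->
  (forall T, 0 < T -> ((w - c / T)%:E <= g T <= (w + c / T)%:E)%E) ->
  limf_esup g (pinfty_nbhs R) = w%:E.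
Proof.
move=> c0 hg.
have key : forall e x, 0 < e -> Num.max 0 (c / e) < x -> 0 < x /\ c / x <= e.
  move=> e x e0; rewrite gt_max => /andP[x0 hx]; split => //.
  rewrite ler_pdivrMr //.
  have hc : c = (c / e) * e by field; rewrite gt_eqF.
  move: hx; set C := c / e => hx; rewrite hc [e * x]mulrC ler_pM2r //; exact: ltW.
apply/eqP; rewrite eq_le; apply/andP; split.
- apply/lee_addgt0Pr => e e0; rewrite limf_esupE.
  apply: ge_ereal_inf; exists (ereal_sup (g @` [set x | Num.max 0 (c / e) < x])).
    exists [set x | Num.max 0 (c / e) < x] => //.
    by exists (Num.max 0 (c / e)); split; [exact: num_real|].
  apply: ge_ereal_sup => _ [x /= hx <-].
  have [x0 hce] := key e x e0 hx.
  have /andP[_ h] := hg x x0.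
  by apply: (le_trans h); rewrite -EFinD lee_fin lerD2l.
- apply/lee_subgt0Pr => e e0; rewrite limf_esupE.
  apply: le_ereal_inf_tmp => _ [V [M [Mr HM]] <-].
  apply: le_ereal_sup_tmp.
  pose x := Num.max M (Num.max 0 (c / e)) + 1.
  have m1 : M <= Num.max M (Num.max 0 (c / e)) by rewrite le_max lexx.
  have m2 : Num.max 0 (c / e) <= Num.max M (Num.max 0 (c / e)) by rewrite le_max lexx orbT.
  have hx1 : M < x by rewrite /x; lra.
  have hx2 : Num.max 0 (c / e) < x by rewrite /x; lra.
  exists (g x); first by exists x => //; exact: HM.
  have [x0 hce] := key e x e0 hx2.
  have /andP[h _] := hg x x0.
  by apply: le_trans h; rewrite -EFinB lee_fin lerD2l lerN2.
Qed.

Lemma liminf_sq (g : R -> \bar R) (w c : R) : 0 <= c ->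
  (forall T, 0 < T -> ((w - c / T)%:E <= g T <= (w + c / T)%:E)%E) ->
  limf_einf g (pinfty_nbhs R) = w%:E.
Proof.
move=> c0 hg; rewrite /limf_einf (@limsup_sq _ (- w) c c0) ?EFinN ?oppeK //.
move=> T T0; have /andP[h1 h2] := hg T T0.
rewrite -[((- w - c / T)%:E)%E]oppeK -[((- w + c / T)%:E)%E]oppeK !leeN2 -!EFinN.
have e1 : - (- w - c / T) = w + c / T by ring.
have e2 : - (- w + c / T) = w - c / T by ring.
by rewrite e1 e2 h1 h2.
Qed.

Lemma esup_const (S : set 'M[R]_(2,1)) (f : 'M[R]_(2,1) -> \bar R) (v : \bar R) :
  S !=set0 -> (forall B, S B -> f B = v) -> ereal_sup [set f B | B in S] = v.
Proof.
move=> [B0 SB0] hf; apply/eqP; rewrite eq_le; apply/andP; split.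
- by apply: ge_ereal_sup => _ [B SB <-]; rewrite hf.
- by apply: le_ereal_sup_tmp; exists (f B0); [exists B0|rewrite hf].
Qed.

Lemma esup_bound (S : set 'M[R]_(2,1)) (f : 'M[R]_(2,1) -> \bar R) (lo hi : \bar R) :
  S !=set0 -> (forall B, S B -> (lo <= f B <= hi)%E) ->
  (lo <= ereal_sup [set f B | B in S] <= hi)%E.
Proof.
move=> [B0 SB0] hf; apply/andP; split.
- apply: le_ereal_sup_tmp; exists (f B0); first by exists B0.
  by have /andP[] := hf B0 SB0.
- by apply: ge_ereal_sup => _ [B SB <-]; have /andP[] := hf B SB.
Qed.

Lemma grass_ne : @grass R 1 2 !=set0.
Proof.
exists (const_mx 1); rewrite /grass /=; apply/eqP; rewrite eqn_leq rank_leq_col /=.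
rewrite lt0n mxrank_eq0; apply/negP => /eqP/matrixP/(_ ord0 ord0); rewrite !mxE.
by move/eqP; rewrite oner_eq0.
Qed.
End L.

Theorem mainTheorem10 (R : realType) (omega rho : R)
  (homega : 0 < omega) (hrho0 : 0 < rho) (hrho1 : rho <= 1)
  (Phi : R -> 'M[R]_2) :
  let A : 'M[R]_2 := \matrix_(i < 2, j < 2)
      (if (i == 0%N :> nat) && (j == 1%N :> nat) then - (rho^-1 * omega)
       else if (i == 1%N :> nat) && (j == 0%N :> nat) then rho * omega else 0) in
  is_solution_operator (fun _ => A) Phi ->
  [/\ theta_sup_limsup 1 (fun _ => A) Phi = omega%:E,
      theta_sup_liminf 1 (fun _ => A) Phi = omega%:E,
      theta_limsup_sup 1 (fun _ => A) Phi = omega%:E &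
      theta_liminf_sup 1 (fun _ => A) Phi = omega%:E].
Proof.
move=> A hPhi.
have h00 : A (@ord0 1) (@ord0 1) = 0 by rewrite mxE.
have h01 : A (@ord0 1) (@ord_max 1) = - (rho^-1 * omega) by rewrite mxE.
have h10 : A (@ord_max 1) (@ord0 1) = rho * omega by rewrite mxE.
have h11 : A (@ord_max 1) (@ord_max 1) = 0 by rewrite mxE.
have AB := @avg_bound R omega rho homega hrho0 A h00 h01 h10 h11 Phi hPhi.
have pi0 : 0 <= pi :> R by apply: ltW; exact: pi_gt0.
split.
- apply: esup_const; first exact: grass_ne.
  move=> B rB; apply: (@limsup_sq R _ omega pi pi0) => T T0; exact: AB.
- apply: esup_const; first exact: grass_ne.
  move=> B rB; apply: (@liminf_sq R _ omega pi pi0) => T T0; exact: AB.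
- apply: (@limsup_sq R _ omega pi pi0) => T T0; apply: esup_bound; first exact: grass_ne.
  move=> B rB; exact: AB.
- apply: (@liminf_sq R _ omega pi pi0) => T T0; apply: esup_bound; first exact: grass_ne.
  move=> B rB; exact: AB.
Qed.
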